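(* There exists an alternating Streett automaton $\mathcal{A}$ on infinite words, with all transition conditions in disjunctive normal form, that is $\exists$-GFG but for which there is no function $f\colon\Sigma^+\to\mathrm{Boxes}_{\mathcal{A}}$ with $f(ua)\in\mathrm{Boxes}_{\mathcal{A},a}$ for all $u\in\Sigma^*,a\in\Sigma$ such that, for every $w=w_0w_1\dots\in L(\mathcal{A})$, the sequence $f(w_0)f(w_0w_1)f(w_0w_1w_2)\cdots$ is universally accepting for $\mathcal{A}$.
   Context: An alternating automaton $\mathcal{A}=(\Sigma,Q,\iota,\delta,\alpha)$ has finite alphabet $\Sigma$, states $Q$, initial state $\iota$, transition function $\delta\colon Q\times\Sigma\to\mathcal{B}^+(Q)$ (positive Boolean formulas over atoms in $Q$); transitions are triples $(q,a,q')$. A Streett condition is a finite set of pairs $(B_i,G_i)$ of sets of transitions; an infinite transition sequence is accepting iff for every $i$ it visits $B_i$ finitely often or $G_i$ infinitely often. $L(\mathcal{A})$: in the model-checking game on $w=a_0a_1\dots$, from $\iota$, in round $i$ from $q_i$ the players descend $\delta(q_i,a_i)$, Eve choosing at disjunctions and Adam at conjunctions, to an atom $q_{i+1}$; Eve wins iff the transition sequence is accepting; $w\in L(\mathcal{A})$ iff Eve wins. Eve's letter game: each round Adam picks a letter and the players descend the transition condition of the current state over it; Eve wins iff the word is not in $L(\mathcal{A})$ or the path is accepting; $\mathcal{A}$ is $\exists$-GFG iff Eve wins it. Boxes: for a letter $a$, a local strategy chooses, for each $q$ and each subformula $\psi_1\vee\psi_2$ of $\delta(q,a)$, one disjunct;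 its box is the set of $(q,a,q')$ such that atom $q'$ is reachable from $\delta(q,a)$ following the local strategy at disjunctions and either conjunct at conjunctions; $\mathrm{Boxes}_{\mathcal{A},a}$ is the set of these boxes and $\mathrm{Boxes}_{\mathcal{A}}=\bigcup_a\mathrm{Boxes}_{\mathcal{A},a}$. A sequence of boxes $\beta_0\beta_1\dots$ is universally accepting if every transition sequence $(q_i,a_i,q_{i+1})_i$ with $q_0=\iota$ and $(q_i,a_i,q_{i+1})\in\beta_i$ for all $i$ is accepting. *)

(* Defs.v *)
From mathcomp Require Import all_boot.
Set Implicit Arguments. Unset Strict Implicit. Unset Printing Implicit Defensive.

Inductive pbf (Q : Type) : Type :=
  | PAtom of Q
  | PAnd of pbf Q & pbf Q
  | POr of pbf Q & pbf Q.
Arguments PAtom {Q}. Arguments PAnd {Q}. Arguments POr {Q}.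

Fixpoint is_clause (Q : Type) (phi : pbf Q) : bool :=
  match phi with
  | PAtom _ => true
  | PAnd f g => is_clause f && is_clause g
  | POr _ _ => false
  end.
Fixpoint is_dnf (Q : Type) (phi : pbf Q) : bool :=
  match phi with
  | POr f g => is_dnf f && is_dnf g
  | _ => is_clause phi
  end.

Definition trans (Sigma Q : finType) := (Q * Sigma * Q)%type.

Record automaton (Sigma Q : finType) := Automaton {
  init : Q;
  delta : Q -> Sigma -> pbf Q;
  streett : seq ({set trans Sigma Q} * {set trans Sigma Q})
}.

Definition accepting (Sigma Q : finType) (A : automaton Sigma Q)
  (t : nat -> trans Sigma Q) : Prop :=
  forall BG, BG \in streett A ->
    (exists N, forall n, N <= n -> t n \notin BG.1) \/
    (forall N, exists2 n, N <= n & t n \in BG.2).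

(* Positions inside a formula are paths from the root (false = left, true = right).
   Descending a formula: Eve resolves disjunctions, Adam conjunctions. *)
Fixpoint descend (Q : Type) (phi : pbf Q) (eve adam : seq bool -> bool)
  (p : seq bool) : Q * seq bool :=
  match phi with
  | PAtom q => (q, p)
  | PAnd f g => if adam p then descend g eve adam (rcons p true)
                else descend f eve adam (rcons p false)
  | POr f g => if eve p then descend g eve adam (rcons p true)
               else descend f eve adam (rcons p false)
  end.

(* An Eve strategy (full information): given the history of completed rounds
   (state, letter, path taken in the transition condition), the current state,
   the current letter and the current position in the formula, choose a disjunct. *)
Definition eve_strategy (Sigma Q : finType) :=
  seq (Q * Sigma * seq bool) -> Q -> Sigma -> seq bool -> bool.

(* The play determined by Eve's strategy, the letters w and Adam's choices
   (adam n p = Adam's choice at conjunction position p in round n).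
   play n = (history before round n, state q_n). *)
Fixpoint play (Sigma Q : finType) (A : automaton Sigma Q) (sigma : eve_strategy Sigma Q)
  (w : nat -> Sigma) (adam : nat -> seq bool -> bool) (n : nat)
  : seq (Q * Sigma * seq bool) * Q :=
  match n with
  | 0 => ([::], init A)
  | n'.+1 =>
      let hq := play A sigma w adam n' in
      let qp := descend (delta A hq.2 (w n')) (sigma hq.1 hq.2 (w n')) (adam n') [::] in
      (rcons hq.1 (hq.2, w n', qp.2), qp.1)
  end.

Definition play_trans (Sigma Q : finType) (A : automaton Sigma Q)
  (sigma : eve_strategy Sigma Q) (w : nat -> Sigma) (adam : nat -> seq bool -> bool)
  (n : nat) : trans Sigma Q :=
  ((play A sigma w adam n).2, w n, (play A sigma w adam n.+1).2).

(* Language: w in L(A) iff Eve wins the model-checking game on w, i.e. has a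
   strategy such that every play consistent with it is accepting. *)
Definition inL (Sigma Q : finType) (A : automaton Sigma Q) (w : nat -> Sigma) : Prop :=
  exists sigma : eve_strategy Sigma Q,
    forall adam, accepting A (play_trans A sigma w adam).

(* Eve's letter game: Adam picks the letters (Eve sees each letter only when its
   round starts); Eve wins iff the word is not in L(A) or the play is accepting. *)
Definition exists_GFG (Sigma Q : finType) (A : automaton Sigma Q) : Prop :=
  exists sigma : eve_strategy Sigma Q,
    forall (w : nat -> Sigma) adam, inL A w -> accepting A (play_trans A sigma w adam).

Fixpoint reach (Q : Type) (phi : pbf Q) (e : seq bool -> bool) (p : seq bool) : seq Q :=
  match phi with
  | PAtom q => [:: q]
  | PAnd f g => reach f e (rcons p false) ++ reach g e (rcons p true)
  | POr f g => if e p then reach g e (rcons p true) else reach f e (rcons p false)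
  end.

(* The box of a local strategy s for letter a (s q = choices at disjunctions of delta q a). *)
Definition box_of (Sigma Q : finType) (A : automaton Sigma Q) (a : Sigma)
  (s : Q -> seq bool -> bool) : {set trans Sigma Q} :=
  [set t : trans Sigma Q | (t.1.2 == a) && (t.2 \in reach (delta A t.1.1 a) (s t.1.1) [::])].

Definition is_box (Sigma Q : finType) (A : automaton Sigma Q) (a : Sigma)
  (beta : {set trans Sigma Q}) : Prop :=
  exists s : Q -> seq bool -> bool, beta = box_of A a s.

Definition univ_accepting (Sigma Q : finType) (A : automaton Sigma Q)
  (beta : nat -> {set trans Sigma Q}) : Prop :=
  forall t : nat -> trans Sigma Q,
    (t 0).1.1 = init A ->
    (forall i, (t i).2 = (t i.+1).1.1) ->
    (forall i, t i \in beta i) ->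
    accepting A t.

Definition word_prefix (Sigma : Type) (w : nat -> Sigma) (n : nat) : seq Sigma :=
  [seq w i | i <- iota 0 n].

(* Main.v *)
Require Import Defs.
From mathcomp Require Import all_boot.
From HB Require Import structures.
From Stdlib Require Import Classical.
Set Implicit Arguments. Unset Strict Implicit. Unset Printing Implicit Defensive.

Inductive st := SH | SC1 | SC2 | SV | SA | SB.
Definition st_enc (s : st) : 'I_6 :=
  match s with SH => @Ordinal 6 0 isT | SC1 => @Ordinal 6 1 isT | SC2 => @Ordinal 6 2 isT
  | SV => @Ordinal 6 3 isT | SA => @Ordinal 6 4 isT | SB => @Ordinal 6 5 isT end.
Definition st_dec (i : 'I_6) : st :=
  match val i with 0 => SH | 1 => SC1 | 2 => SC2 | 3 => SV | 4 => SA | _ => SB end.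
Lemma st_K : cancel st_enc st_dec. Proof. by case. Qed.
HB.instance Definition _ := Finite.copy st (can_type st_K).

Definition hubF : pbf st := PAnd (PAnd (PAtom SH) (PAtom SC1)) (PAtom SC2).
Definition deltaA (q : st) (_ : unit) : pbf st :=
  match q with
  | SH | SA | SB => hubF
  | SC1 | SC2 => PAtom SV
  | SV => POr (PAtom SA) (PAtom SB)
  end.
Definition pair1 : {set trans unit st} * {set trans unit st} :=
  ([set t : trans unit st | t.2 == SC1], [set t : trans unit st | t.2 == SA]).
Definition pair2 : {set trans unit st} * {set trans unit st} :=
  ([set t : trans unit st | t.2 == SC2], [set t : trans unit st | t.2 == SB]).
Definition Aut : automaton unit st := Automaton SH deltaA [:: pair1; pair2].

Definition sigmaE : eve_strategy unit st :=
  fun h q a p => (last (SH, tt, [::]) h).1.1 == SC2.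

Section Eve.
Variables (w : nat -> unit) (adam : nat -> seq bool -> bool).
Let qq n := (play Aut sigmaE w adam n).2.

Let hh n := (play Aut sigmaE w adam n).1.
Lemma qq_step n : qq n.+1 = (descend (deltaA (qq n) (w n)) (sigmaE (hh n) (qq n) (w n)) (adam n) [::]).1.
Proof. by []. Qed.
Lemma hh_last n : (last (SH, tt, [::]) (hh n.+1)).1.1 = qq n.
Proof. by rewrite /hh /= last_rcons. Qed.

Lemma qq_C1 n : qq n.+1 = SC1 -> qq n.+3 = SA.
Proof.
move=> H1. have H2 : qq n.+2 = SV by rewrite qq_step H1.
by rewrite qq_step H2 /= /sigmaE hh_last H1.
Qed.

Lemma qq_C2 n : qq n.+1 = SC2 -> qq n.+3 = SB.
Proof.
move=> H1. have H2 : qq n.+2 = SV by rewrite qq_step H1.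
by rewrite qq_step H2 /= /sigmaE hh_last H1.
Qed.

Lemma eve_acc : accepting Aut (play_trans Aut sigmaE w adam).
Proof.
move=> BG HBG.
case: (classic (exists N, forall n, N <= n ->
      play_trans Aut sigmaE w adam n \notin BG.1)) => [H|H]; [by left|right].
move=> N.
have [n [Hn HB]] : exists n, N <= n /\ play_trans Aut sigmaE w adam n \in BG.1.
  apply: NNPP => C; apply: H; exists N => n hn; apply/negP => hb; apply: C; by exists n.
exists n.+2; first by apply: leq_trans Hn _; rewrite leqW // leqW.
move: HBG; rewrite !inE => /orP[/eqP E|/eqP E]; subst BG;
  move: HB; rewrite /= inE /play_trans /= => /eqP HB; rewrite inE /=; apply/eqP.
- exact: (qq_C1 HB).
- exact: (qq_C2 HB).
Qed.
End Eve.

Lemma reach_hub e : reach hubF e [::] = [:: SH; SC1; SC2].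
Proof. by []. Qed.

Section Box.
Variable beta : nat -> {set trans unit st}.
Hypothesis hb : forall n, is_box Aut tt (beta n).

Definition dd n : st := if (SV, tt, SA) \in beta n then SA else SB.

Lemma ddV n : (SV, tt, dd n) \in beta n.
Proof.
rewrite /dd; case: ifP => // HA.
have [s Hs] := hb n. move: HA; rewrite Hs /box_of !inE /=.
by case: (s SV [::]).
Qed.

Lemma dd_AB n : (dd n == SA) || (dd n == SB).
Proof. by rewrite /dd; case: ifP. Qed.

Definition ishub (q : st) := match q with SH | SA | SB => true | _ => false end.

Variable e : st.
Definition ce := if e == SA then SC2 else SC1.

Definition step n (q : st) : st :=
  match q with
  | SH | SA | SB => if dd n.+2 == e then ce else SH
  | SC1 | SC2 => SV
  | SV => dd n
  end.
Fixpoint qp n := match n with 0 => SH | n'.+1 => step n' (qp n') end.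
Definition tp n : trans unit st := (qp n, tt, qp n.+1).

Lemma tp_in n : tp n \in beta n.
Proof.
rewrite /tp /=. case E: (qp n); rewrite /=; try exact: ddV.
all: have [s Hs] := hb n; rewrite Hs /box_of inE /=.
all: try by [].
all: by case: ifP => _ //; rewrite /ce; case: ifP.
Qed.
Lemma ce_ne : (ce != SV) && (ce != SH) && (ce != SA) && (ce != SB).
Proof. by rewrite /ce; case: ifP. Qed.

Lemma step_V n q : step n q = SV -> q = SC1 \/ q = SC2.
Proof.
move: ce_ne; case: q => /= Hc; try by [left|right].
all: try (case: ifP => _ H; by rewrite H in Hc).
by move: (dd_AB n) => /[swap] ->.
Qed.

Lemma step_C n q : step n q = ce -> ishub q /\ dd n.+2 = e.
Proof.
move: ce_ne; case: q => /= Hc.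
all: try (case: ifP => [/eqP H _ //|_ H]; by rewrite -H in Hc).
all: try (move=> H; by rewrite -H in Hc).
move=> H; move: (dd_AB n); rewrite H /ce; by case: ifP.
Qed.

Lemma step_CC n q : step n q = SC1 \/ step n q = SC2 -> step n q = ce.
Proof.
case: q => /=; rewrite /ce; case: (dd n) (dd_AB n) => //= _;
  case: (dd n.+2 == e); case: (e == SA); intuition congruence.
Qed.

Lemma qpV n : qp n.+1 = SV -> dd n.+1 = e.
Proof.
move=> /step_V; case: n => [|m] /=; first by case.
by move/step_CC/step_C => [].
Qed.

Hypothesis eAB : (e == SA) || (e == SB).
Definition oth := if e == SA then SB else SA.

Lemma noG n : qp n.+1 != oth.
Proof.
rewrite /=; case E: (qp n); rewrite /= /oth /ce.
all: try (case: (dd n.+2 == e); by case/orP: eAB => /eqP ->).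
case: n E => [//|m] /qpV ->; by case/orP: eAB => /eqP ->.
Qed.

Lemma hub_soon m : exists k, m <= k <= m.+2 /\ ishub (qp k).
Proof.
have H0 : m <= m <= m.+2 by rewrite leqnn !leqW.
have H1 : m <= m.+1 <= m.+2 by rewrite !leqnSn.
have H2 : m <= m.+2 <= m.+2 by rewrite leqnn !leqW.
case E: (qp m).
- by exists m; rewrite E.
- exists m.+2; split => //. rewrite /= E /=.
  by case/orP: (dd_AB m.+1) => /eqP ->.
- exists m.+2; split => //. rewrite /= E /=.
  by case/orP: (dd_AB m.+1) => /eqP ->.
- exists m.+1; split => //. rewrite /= E /=.
  by case/orP: (dd_AB m) => /eqP ->.
- by exists m; rewrite E.
- by exists m; rewrite E.
Qed.

Lemma hits d : forall k, ishub (qp k) -> dd (k + d).+2 = e -> exists n, k <= n /\ qp n.+1 = ce.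
Proof.
elim: d => [|d IH] k Hk He.
- exists k; split => //. rewrite addn0 in He. rewrite /=; case: (qp k) Hk => // _; by rewrite /= He eqxx.
- case Ek: (dd k.+2 == e).
  + exists k; split => //; rewrite /=; case: (qp k) Hk => // _; by rewrite /= Ek.
  + have Hk1 : qp k.+1 = SH by rewrite /=; case: (qp k) Hk => // _; rewrite /= Ek.
    have Hd : dd (k.+1 + d).+2 = e by rewrite addSnnS.
    have Hh : ishub (qp k.+1) by rewrite Hk1.
    have [n [Hn Hq]] := IH k.+1 Hh Hd.
    by exists n; split => //; exact: ltnW.
Qed.

Definition pe := if e == SA then pair2 else pair1.
Lemma pe1 t : (t \in pe.1) = (t.2 == ce).
Proof. by rewrite /pe /ce; case: ifP => _; rewrite inE. Qed.
Lemma pe2 t : (t \in pe.2) = (t.2 == oth).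
Proof. by rewrite /pe /oth; case: ifP => _; rewrite inE. Qed.
Lemma pe_in : pe \in streett Aut.
Proof. by rewrite /pe; case: ifP => _; rewrite !inE eqxx ?orbT. Qed.

Lemma path_rej : (forall N, exists i, N <= i /\ dd i = e) ->
  ~ accepting Aut tp.
Proof.
move=> Hinf Hacc. case: (Hacc pe pe_in) => [[N HN]|HG].
- have [k [/andP[Hk1 Hk2] Hk]] := hub_soon N.
  have [i [Hi Hdi]] := Hinf k.+2.
  have Ei : i = (k + (i - k.+2)).+2.
    by rewrite -!addSn subnKC.
  rewrite Ei in Hdi.
  have [n [Hn Hq]] := hits Hk Hdi.
  have := HN n (leq_trans Hk1 Hn). by rewrite pe1 /tp Hq eqxx.
- have [n _] := HG 0. rewrite pe2 /tp. by rewrite (negbTE (noG n)).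
Qed.
End Box.

Theorem mainTheorem12 :
  exists (Sigma Q : finType) (A : automaton Sigma Q),
    (forall q a, is_dnf (delta A q a)) /\
    exists_GFG A /\
    ~ (exists f : seq Sigma -> {set trans Sigma Q},
         (forall (u : seq Sigma) (a : Sigma), is_box A a (f (rcons u a))) /\
         (forall w : nat -> Sigma, inL A w ->
            univ_accepting A (fun i => f (word_prefix w i.+1)))).
Proof.
exists unit, st, Aut. split; first by move=> q a; case: q.
split; first by exists sigmaE => w adam _; apply: eve_acc.
move=> [f [Hf Hu]].
pose w := fun _ : nat => tt.
have HL : inL Aut w by exists sigmaE; apply: eve_acc.
have Hua := Hu w HL.
pose beta := fun i => f (word_prefix w i.+1).
have hb : forall n, is_box Aut tt (beta n).
  move=> n; rewrite /beta /word_prefix -addn1 iotaD map_cat /= cats1.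
  exact: Hf.
have Hacc e : (e == SA) || (e == SB) ->
    (forall N, exists i, N <= i /\ dd beta i = e) -> False.
  move=> eAB Hinf; apply: (path_rej eAB Hinf); apply: Hua => //.
  exact: tp_in hb e.
case: (classic (forall N, exists i, N <= i /\ dd beta i = SB)) => H.
  exact: (Hacc SB).
apply: (Hacc SA) => // N. apply: NNPP => C; apply: H => M.
exists (maxn N M); split; first exact: leq_maxr.
case/orP: (dd_AB beta (maxn N M)) => /eqP E //.
exfalso; apply: C; exists (maxn N M); split => //; exact: leq_maxl.
Qed.
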